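(* Let $\mathcal{C}$ be a category, $D \colon \mathcal{I} \to \mathcal{C}$ and $E \colon \mathcal{J} \to \mathcal{C}$ diagrams, $H \colon \mathcal{I}' \to \mathcal{I}$ a final functor and $K \colon \mathcal{J}' \to \mathcal{J}$ an initial functor. Then for any cocone $p \colon D \to \Delta V$ and any cone $q \colon \Delta W \to E$, we have $p \perp q$ if and only if $pH \perp qK$.
   Context: A cocone under $D$ with vertex $V$ is a natural transformation $p \colon D \to \Delta V$; a cone over $E$ with vertex $W$ is a natural transformation $q \colon \Delta W \to E$; $pH \colon DH \to \Delta V$ and $qK \colon \Delta W \to EK$ denote whiskerings. A cylinder $D \rightsquigarrow E$ is a family $r_{ij} \colon Di \to Ej$ natural in $(i,j)$; $q\cdot h$ for a cocone $h\colon D\to\Delta W$ and cone $q\colon \Delta W\to E$ is the cylinder with components $q_jh_i$. Orthogonality $p \perp q$ means: for every cocone $h \colon D \to \Delta W$ and cone $k \colon \Delta V \to E$ with $q \cdot h = k \cdot p$ as cylinders, there is a unique $j \colon V \to W$ with $j \cdot p = h$ and $q \cdot j = k$. A functor $K \colon \mathcal{J}' \to \mathcal{J}$ is initial if each comma category $K/j$ is connected (nonempty and connected); $H \colon \mathcal{I}' \to \mathcal{I}$ is final if each comma category $i/H$ is connected. *)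

(* Defs.v *)
From Stdlib Require Import Relations.

Set Implicit Arguments.
Unset Strict Implicit.

(** Categories (hom-types with Leibniz equality of morphisms).
    [comp g f] is g ∘ f : a -> c for f : a -> b, g : b -> c. *)
Record Category := {
  Ob :> Type;
  Hom : Ob -> Ob -> Type;
  idm : forall a, Hom a a;
  comp : forall a b c, Hom b c -> Hom a b -> Hom a c;
  comp_id_l : forall a b (f : Hom a b), comp (idm b) f = f;
  comp_id_r : forall a b (f : Hom a b), comp f (idm a) = f;
  comp_assoc : forall a b c d (f : Hom a b) (g : Hom b c) (h : Hom c d),
      comp h (comp g f) = comp (comp h g) f
}.

Arguments Hom {C} : rename.
Arguments idm {C} : rename.
Arguments comp {C a b c} : rename.

Record Functor (A B : Category) := {
  fobj :> A -> B;
  fmap : forall a a' : A, Hom a a' -> Hom (fobj a) (fobj a');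
  fmap_id : forall a, fmap (idm a) = idm (fobj a);
  fmap_comp : forall a b c (f : Hom a b) (g : Hom b c),
      fmap (comp g f) = comp (fmap g) (fmap f)
}.

Arguments fmap {A B} F {a a'} : rename.

Definition connected (O : Type) (M : O -> O -> Type) : Prop :=
  inhabited O /\
  forall x y : O, clos_refl_sym_trans O (fun a b => inhabited (M a b)) x y.

(** Comma category i/H for H : I' -> I and i : I:
    objects (i', f : i -> H i'), morphisms (i'1,f1) -> (i'2,f2) are
    u : i'1 -> i'2 with H u ∘ f1 = f2. *)
Definition under_ob (I' I : Category) (H : Functor I' I) (i : I) : Type :=
  { i' : I' & Hom i (H i') }.

Definition under_hom (I' I : Category) (H : Functor I' I) (i : I)
  (x y : under_ob H i) : Type :=
  { u : Hom (projT1 x) (projT1 y) | comp (fmap H u) (projT2 x) = projT2 y }.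

(** Comma category K/j for K : J' -> J and j : J:
    objects (j', f : K j' -> j), morphisms (j'1,f1) -> (j'2,f2) are
    u : j'1 -> j'2 with f2 ∘ K u = f1. *)
Definition over_ob (J' J : Category) (K : Functor J' J) (j : J) : Type :=
  { j' : J' & Hom (K j') j }.

Definition over_hom (J' J : Category) (K : Functor J' J) (j : J)
  (x y : over_ob K j) : Type :=
  { u : Hom (projT1 x) (projT1 y) | comp (projT2 y) (fmap K u) = projT2 x }.

Definition final (I' I : Category) (H : Functor I' I) : Prop :=
  forall i : I, connected (@under_hom I' I H i).

Definition initial (J' J : Category) (K : Functor J' J) : Prop :=
  forall j : J, connected (@over_hom J' J K j).

Record cocone (I C : Category) (D : Functor I C) (V : C) := {
  cocone_at :> forall i : I, Hom (D i) V;
  cocone_nat : forall (i i' : I) (f : Hom i i'),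
      comp (cocone_at i') (fmap D f) = cocone_at i
}.

Record cone (J C : Category) (E : Functor J C) (W : C) := {
  cone_at :> forall j : J, Hom W (E j);
  cone_nat : forall (j j' : J) (f : Hom j j'),
      comp (fmap E f) (cone_at j) = cone_at j'
}.

Definition orthogonal (I J C : Category) (D : Functor I C) (E : Functor J C)
  (V W : C) (p : cocone D V) (q : cone E W) : Prop :=
  forall (h : cocone D W) (k : cone E V),
    (forall (i : I) (j : J), comp (q j) (h i) = comp (k j) (p i)) ->
    exists t : Hom V W,
      ((forall i : I, comp t (p i) = h i) /\ (forall j : J, comp (q j) t = k j)) /\
      (forall t' : Hom V W,
         (forall i : I, comp t' (p i) = h i) /\ (forall j : J, comp (q j) t' = k j) ->
         t' = t).

Definition Fcomp (A B C : Category) (F : Functor B C) (G : Functor A B) :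
  Functor A C.
Proof.
  refine {| fobj := fun a => F (G a);
            fmap := fun a a' f => fmap F (fmap G f) |}.
  - intro a; rewrite (fmap_id G), (fmap_id F); reflexivity.
  - intros a b c f g; rewrite (fmap_comp G), (fmap_comp F); reflexivity.
Defined.

Definition whisker_cocone (I' I C : Category) (D : Functor I C) (V : C)
  (p : cocone D V) (H : Functor I' I) : cocone (Fcomp D H) V.
Proof.
  refine (@Build_cocone I' C (Fcomp D H) V (fun i' => p (H i')) _).
  intros i i' f; simpl; apply (cocone_nat p).
Defined.

Definition whisker_cone (J' J C : Category) (E : Functor J C) (W : C)
  (q : cone E W) (K : Functor J' J) : cone (Fcomp E K) W.
Proof.
  refine (@Build_cone J' C (Fcomp E K) W (fun j' => q (K j')) _).
  intros j j' f; simpl; apply (cone_nat q).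
Defined.

(* Main.v *)
Require Import Defs.
From Stdlib Require Import Relations ClassicalEpsilon.
Set Implicit Arguments.

Lemma crst_const (O X : Type) (M : O -> O -> Type) (F : O -> X) :
  (forall a b, M a b -> F a = F b) ->
  forall x y, clos_refl_sym_trans O (fun a b => inhabited (M a b)) x y -> F x = F y.
Proof.
  intros HF x y Hc; induction Hc as [a b [m]| | |]; eauto.
  congruence.
Qed.

Section Ext.
Context (I' I C : Category) (D : Functor I C) (H : Functor I' I) (HH : final H)
  (W : C) (h' : cocone (Fcomp D H) W).

Definition uval (i : I) (x : under_ob H i) : Hom (D i) W :=
  comp (h' (projT1 x) : Hom (D (H (projT1 x))) W) (fmap D (projT2 x)).

Lemma uval_const i (x y : under_ob H i) : uval x = uval y.
Proof.
  apply (@crst_const _ _ (@under_hom I' I H i)); [|apply (proj2 (HH i))].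
  intros [a fa] [b fb] [u Hu]; unfold uval; simpl in *.
  subst fb. rewrite (fmap_comp D), comp_assoc.
  f_equal. symmetry. exact (cocone_nat h' u).
Qed.

Definition ext_at (i : I) : Hom (D i) W :=
  uval (epsilon (proj1 (HH i)) (fun _ => True)).

Lemma ext_nat (i i2 : I) (f : Hom i i2) : comp (ext_at i2) (fmap D f) = ext_at i.
Proof.
  unfold ext_at. set (y := epsilon (proj1 (HH i2)) (fun _ => True)).
  rewrite <- (uval_const (existT _ (projT1 y) (comp (projT2 y) f))).
  unfold uval; simpl. rewrite (fmap_comp D), comp_assoc. reflexivity.
Qed.

Definition ext_cocone : cocone D W := Build_cocone ext_nat.

Lemma ext_cocone_H (i' : I') : ext_cocone (H i') = h' i'.
Proof.
  simpl; unfold ext_at.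
  rewrite (uval_const _ (existT _ i' (idm (H i')))).
  unfold uval; simpl. rewrite (fmap_id D), comp_id_r. reflexivity.
Qed.
End Ext.

Section ExtC.
Context (J' J C : Category) (E : Functor J C) (K : Functor J' J) (HK : initial K)
  (V : C) (k' : cone (Fcomp E K) V).

Definition oval (j : J) (x : over_ob K j) : Hom V (E j) :=
  comp (fmap E (projT2 x)) (k' (projT1 x) : Hom V (E (K (projT1 x)))).

Lemma oval_const j (x y : over_ob K j) : oval x = oval y.
Proof.
  apply (@crst_const _ _ (@over_hom J' J K j)); [|apply (proj2 (HK j))].
  intros [a fa] [b fb] [u Hu]; unfold oval; simpl in *.
  subst fa. rewrite (fmap_comp E), <- comp_assoc.
  f_equal. exact (cone_nat k' u).
Qed.

Definition cext_at (j : J) : Hom V (E j) :=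
  oval (epsilon (proj1 (HK j)) (fun _ => True)).

Lemma cext_nat (j j2 : J) (f : Hom j j2) : comp (fmap E f) (cext_at j) = cext_at j2.
Proof.
  unfold cext_at. set (y := epsilon (proj1 (HK j)) (fun _ => True)).
  rewrite <- (oval_const (existT _ (projT1 y) (comp f (projT2 y)))).
  unfold oval; simpl. rewrite (fmap_comp E), comp_assoc. reflexivity.
Qed.

Definition ext_cone : cone E V := Build_cone cext_nat.

Lemma ext_cone_K (j' : J') : ext_cone (K j') = k' j'.
Proof.
  simpl; unfold cext_at.
  rewrite (oval_const _ (existT _ j' (idm (K j')))).
  unfold oval; simpl. rewrite (fmap_id E), comp_id_l. reflexivity.
Qed.
End ExtC.

Theorem lemma2p7 (C I J I' J' : Category)
  (D : Functor I C) (E : Functor J C)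
  (H : Functor I' I) (K : Functor J' J)
  (HH : final H) (HK : initial K)
  (V W : C) (p : cocone D V) (q : cone E W) :
  orthogonal p q <-> orthogonal (whisker_cocone p H) (whisker_cone q K).
Proof.
  assert (Hres : forall (X : C) (t : Hom V X) (h : cocone D X),
    (forall i', comp t (p (H i')) = h (H i')) -> forall i, comp t (p i) = h i).
  { intros X t h Ht i. destruct (proj1 (HH i)) as [[i' f]].
    rewrite <- (cocone_nat p f), <- (cocone_nat h f), comp_assoc, Ht. reflexivity. }
  assert (Kres : forall (X : C) (t : Hom X W) (k : cone E X),
    (forall j', comp (q (K j')) t = k (K j')) -> forall j, comp (q j) t = k j).
  { intros X t k Ht j. destruct (proj1 (HK j)) as [[j' g]].
    rewrite <- (cone_nat q g), <- (cone_nat k g), <- comp_assoc, Ht. reflexivity. }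
  split.
  - intros Horth h' k' Hc.
    set (h := ext_cocone HH h'). set (k := ext_cone HK k').
    assert (Hhk : forall i j, comp (q j) (h i) = comp (k j) (p i)).
    { intros i j. destruct (proj1 (HH i)) as [[i' f]].
      destruct (proj1 (HK j)) as [[j' g]].
      rewrite <- (cocone_nat p f), <- (cocone_nat h f), <- (cone_nat q g), <- (cone_nat k g).
      assert (E1 : comp (q (K j')) (h (H i')) = comp (k (K j')) (p (H i'))).
      { unfold h, k. rewrite ext_cocone_H, ext_cone_K. exact (Hc i' j'). }
      rewrite <- !comp_assoc. f_equal. rewrite !comp_assoc. f_equal. exact E1. }
    destruct (Horth h k Hhk) as [t [[T1 T2] Tu]].
    exists t. split; [split|].
    + intro i'. simpl. rewrite T1. apply ext_cocone_H.
    + intro j'. simpl. rewrite T2. apply ext_cone_K.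
    + intros t' [U1 U2]. apply Tu. split.
      * apply Hres. intro i'. transitivity (h' i'); [exact (U1 i') | symmetry; apply ext_cocone_H].
      * apply Kres. intro j'. transitivity (k' j'); [exact (U2 j') | symmetry; apply ext_cone_K].
  - intros Horth h k Hc.
    destruct (Horth (whisker_cocone h H) (whisker_cone k K)) as [t [[T1 T2] Tu]].
    { intros i' j'. apply Hc. }
    exists t. split; [split|].
    + apply Hres. exact T1.
    + apply Kres. exact T2.
    + intros t' [U1 U2]. apply Tu. split.
      * intro i'. apply U1.
      * intro j'. apply U2.
Qed.
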